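(* Every finitely generated infinite amenable group is extraterrestrial.
   Context: A finitely generated group is extraterrestrial if its Cayley graph $\mathrm{Cay}(\Gamma,S)$ with respect to some (equivalently any) finite symmetric generating set $S$ is extraterrestrial. A graph $G=(V,E)$ is extraterrestrial if for every $m\in\mathbb N$ there exists $k\in\mathbb N$ such that for every $r\in\mathbb N$ there exists an $(m,k,r)$-UFO: a triple $(U,F,O)$ of pairwise disjoint finite subsets of $V$ with $U\neq\emptyset$ such that $|U|\ge m|F|$, there is a bijection $\mu:U\to O$ with $d_G(u,\mu(u))\le k$ for all $u$, and every path (sequence of distinct vertices with consecutive ones adjacent) from a vertex of $U$ to a vertex of $O$ either contains a vertex of $F$ or has length at least $r$. *)

(* Defs.v *)
From Stdlib Require Import Reals List Arith.
Import ListNotations.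
Open Scope R_scope.

Record IsGroup {G : Type} (mul : G -> G -> G) (inv : G -> G) (e : G) : Prop := {
  grp_assoc : forall x y z, mul x (mul y z) = mul (mul x y) z;
  grp_idl : forall x, mul e x = x;
  grp_idr : forall x, mul x e = x;
  grp_invl : forall x, mul (inv x) x = e;
  grp_invr : forall x, mul x (inv x) = e }.

Definition InfiniteType (G : Type) : Prop :=
  ~ exists l : list G, forall x, In x l.

Definition Symmetric {G : Type} (inv : G -> G) (S : list G) : Prop :=
  forall s, In s S -> In (inv s) S.

Definition Generates {G : Type} (mul : G -> G -> G) (inv : G -> G) (e : G)
  (S : list G) : Prop :=
  forall g, exists l : list G,
    Forall (fun t => In t S \/ In (inv t) S) l /\ g = fold_right mul e l.

Definition FinitelyGenerated {G : Type} (mul : G -> G -> G) (inv : G -> G)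
  (e : G) : Prop :=
  exists S : list G, Generates mul inv e S.

Definition Amenable {G : Type} (mul : G -> G -> G) (inv : G -> G) : Prop :=
  exists m : (G -> Prop) -> R,
    (forall A, 0 <= m A) /\
    m (fun _ => True) = 1 /\
    (forall A B, (forall x, ~ (A x /\ B x)) ->
        m (fun x => A x \/ B x) = m A + m B) /\
    (forall g A, m (fun x => A (mul (inv g) x)) = m A).

Definition cayley_adj {G : Type} (mul : G -> G -> G) (S : list G) (x y : G) : Prop :=
  x <> y /\ exists s, In s S /\ y = mul x s.

Fixpoint dist_le {V : Type} (adj : V -> V -> Prop) (k : nat) (u v : V) : Prop :=
  match k with
  | O => u = v
  | S k' => u = v \/ exists w, adj u w /\ dist_le adj k' w v
  end.

Fixpoint chain {V : Type} (adj : V -> V -> Prop) (x : V) (l : list V) : Prop :=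
  match l with
  | [] => True
  | y :: l' => adj x y /\ chain adj y l'
  end.

(** The path u :: l (distinct vertices, consecutive adjacent) from u to
    [last l u]; its length is [length l]. *)
Definition is_path {V : Type} (adj : V -> V -> Prop) (u : V) (l : list V) : Prop :=
  NoDup (u :: l) /\ chain adj u l.

Definition disjoint_lists {V : Type} (A B : list V) : Prop :=
  forall x, In x A -> ~ In x B.

(** (m,k,r)-UFO; finite vertex sets are given as duplicate-free lists. *)
Definition UFO {V : Type} (adj : V -> V -> Prop) (m k r : nat)
  (U F O : list V) : Prop :=
  NoDup U /\ NoDup F /\ NoDup O /\
  disjoint_lists U F /\ disjoint_lists U O /\ disjoint_lists F O /\
  U <> [] /\
  (m * length F <= length U)%nat /\
  (exists mu : V -> V,
      (forall u, In u U -> In (mu u) O) /\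
      (forall u1 u2, In u1 U -> In u2 U -> mu u1 = mu u2 -> u1 = u2) /\
      (forall o, In o O -> exists u, In u U /\ mu u = o) /\
      (forall u, In u U -> dist_le adj k u (mu u))) /\
  (forall u l, In u U -> is_path adj u l -> In (last l u) O ->
      (exists x, In x (u :: l) /\ In x F) \/ (r <= length l)%nat).

Definition Extraterrestrial {V : Type} (adj : V -> V -> Prop) : Prop :=
  forall m : nat, exists k : nat, forall r : nat,
    exists U F O : list V, UFO adj m k r U F O.

(** A finitely generated group is extraterrestrial: its Cayley graph w.r.t.
    a finite symmetric generating set is extraterrestrial.  We use the
    "any generating set" form of the definition. *)
Definition ExtraterrestrialGroup {G : Type} (mul : G -> G -> G) (inv : G -> G)
  (e : G) : Prop :=
  forall S : list G, Symmetric inv S -> Generates mul inv e S ->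
    Extraterrestrial (cayley_adj mul S).

(* Main.v *)
Require Import Defs.
From Stdlib Require Import Reals List.
From Stdlib Require Import Bool ClassicalEpsilon Classical Arith Lia Lra.
From Stdlib Require Import FunctionalExtensionality PropExtensionality.
Import ListNotations.
Local Open Scope nat_scope.

Definition dec {X : Type} (x y : X) : {x = y} + {x <> y} :=
  excluded_middle_informative (x = y).

Definition card {X : Type} (l : list X) : nat := length (nodup dec l).

Definition inb {X : Type} (x : X) (l : list X) : bool :=
  if in_dec dec x l then true else false.

Lemma inb_true {X} (x : X) l : inb x l = true <-> In x l.
Proof. unfold inb; destruct (in_dec dec x l); split; intros; auto; discriminate. Qed.

Lemma inb_false {X} (x : X) l : inb x l = false <-> ~ In x l.
Proof. unfold inb; destruct (in_dec dec x l); split; intros; auto; try discriminate; contradiction. Qed.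

Definition notin {X} (l : list X) : X -> bool := fun x => negb (inb x l).
Definition isin {X} (l : list X) : X -> bool := fun x => inb x l.

Lemma in_notin {X} (l1 l2 : list X) x : In x (filter (notin l2) l1) <-> In x l1 /\ ~ In x l2.
Proof.
  rewrite filter_In; unfold notin. destruct (inb x l2) eqn:E.
  - apply inb_true in E. simpl. split; intros [? ?]; [discriminate | contradiction].
  - apply inb_false in E. simpl. tauto.
Qed.

Lemma in_isin {X} (l1 l2 : list X) x : In x (filter (isin l2) l1) <-> In x l1 /\ In x l2.
Proof.
  rewrite filter_In; unfold isin. rewrite inb_true. tauto.
Qed.

Lemma card_incl {X} (l1 l2 : list X) : incl l1 l2 -> card l1 <= card l2.
Proof.
  intros H. unfold card. apply NoDup_incl_length. apply NoDup_nodup.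
  intros x Hx. apply nodup_In. apply nodup_In in Hx. auto.
Qed.

Lemma card_ext {X} (l1 l2 : list X) : (forall x, In x l1 <-> In x l2) -> card l1 = card l2.
Proof.
  intros H. apply Nat.le_antisymm; apply card_incl; intros x Hx; apply H; auto.
Qed.

Lemma card_le_length {X} (l : list X) : card l <= length l.
Proof.
  unfold card. apply NoDup_incl_length. apply NoDup_nodup. intros x Hx; apply nodup_In in Hx; auto.
Qed.

Lemma card_NoDup {X} (l : list X) : NoDup l -> card l = length l.
Proof. intros H. unfold card. rewrite nodup_fixed_point; auto. Qed.

Lemma card_app_disj {X} (l1 l2 : list X) :
  (forall x, In x l1 -> ~ In x l2) -> card (l1 ++ l2) = card l1 + card l2.
Proof.
  intros H. transitivity (card (nodup dec l1 ++ nodup dec l2)).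
  - apply card_ext. intros x. rewrite !in_app_iff, !nodup_In. tauto.
  - rewrite card_NoDup. rewrite length_app. unfold card. reflexivity.
    apply NoDup_app; try apply NoDup_nodup.
    intros a Ha Hb. apply nodup_In in Ha. apply nodup_In in Hb. eapply H; eauto.
Qed.

Lemma card_app_le {X} (l1 l2 : list X) : card (l1 ++ l2) <= card l1 + card l2.
Proof.
  transitivity (card (nodup dec l1 ++ nodup dec l2)).
  - apply Nat.eq_le_incl. apply card_ext. intros x. rewrite !in_app_iff, !nodup_In. tauto.
  - unfold card at 2 3. rewrite <- length_app. apply card_le_length.
Qed.

Lemma card_split {X} (l1 l2 : list X) :
  card l1 = card (filter (isin l2) l1) + card (filter (notin l2) l1).
Proof.
  rewrite <- card_app_disj.
  - apply card_ext. intros x. rewrite in_app_iff, in_isin, in_notin. tauto.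
  - intros x H1 H2. apply in_isin in H1. apply in_notin in H2. tauto.
Qed.

Lemma card_map_le {X Y} (f : X -> Y) l : card (map f l) <= card l.
Proof.
  transitivity (card (map f (nodup dec l))).
  - apply card_incl. intros y Hy. apply in_map_iff in Hy. destruct Hy as [x [<- Hx]].
    apply in_map. apply nodup_In. auto.
  - etransitivity. apply card_le_length. rewrite length_map. unfold card. lia.
Qed.

Lemma card_nil {X} : card (@nil X) = 0.
Proof. reflexivity. Qed.

Lemma card_pos {X} (l : list X) x : In x l -> 1 <= card l.
Proof.
  intros H. unfold card. destruct (nodup dec l) eqn:E.
  - exfalso. apply (nodup_In dec l x) in H. rewrite E in H. inversion H.
  - simpl. lia.
Qed.

Lemma card_zero {X} (l : list X) : card l = 0 -> l = [].
Proof.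
  destruct l as [|x l]; auto. intros H. pose proof (card_pos (x::l) x (or_introl eq_refl)). lia.
Qed.

Lemma card_single {X} (x : X) : card [x] = 1.
Proof. reflexivity. Qed.

Section Hall.
Variables (A B : Type).

Definition HallCond (nb : A -> list B) (L : list A) :=
  forall Y, incl Y L -> card Y <= card (flat_map nb Y).

Definition Matching (nb : A -> list B) (L : list A) (f : A -> B) :=
  (forall a, In a L -> In (f a) (nb a)) /\
  (forall a1 a2, In a1 L -> In a2 L -> f a1 = f a2 -> a1 = a2).

Lemma hall_aux (b0 : B) : forall n (L : list A) nb, length L <= n -> NoDup L ->
  HallCond nb L -> exists f, Matching nb L f.
Proof.
  induction n as [|n IH]; intros L nb Hlen Hnd HH.
  - destruct L; [|simpl in Hlen; lia]. exists (fun _ => b0). split; intros; contradiction.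
  - destruct L as [|a L'].
    + exists (fun _ => b0). split; intros; contradiction.
    + simpl in Hlen. assert (HaL' : ~ In a L') by (inversion Hnd; auto).
      assert (HndL' : NoDup L') by (inversion Hnd; auto).
      destruct (classic (exists Y, incl Y L' /\ Y <> [] /\ card (flat_map nb Y) <= card Y))
        as [[Y [HY1 [HY2 HY3]]] | Hno].
      *
        set (Y0 := nodup dec Y).
        assert (HY0Y : forall x, In x Y0 <-> In x Y) by (intros; apply nodup_In).
        assert (HcY0 : card Y0 = card Y) by (apply card_ext; auto).
        assert (HndY0 : NoDup Y0) by apply NoDup_nodup.
        assert (HY0L : incl Y0 (a :: L')).
        { intros x Hx. right. apply HY1. apply HY0Y. auto. }
        destruct (IH Y0 nb) as [f1 [Hf1a Hf1b]].
        { rewrite <- (card_NoDup Y0 HndY0), HcY0.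
          pose proof (card_incl Y L' HY1). pose proof (card_le_length L'). lia. }
        { auto. }
        { intros Z HZ. apply HH. intros x Hx. apply HY0L. auto. }
        set (NY := flat_map nb Y0).
        set (R := filter (notin Y0) (a :: L')).
        set (nb2 := fun x => filter (notin NY) (nb x)).
        destruct (IH R nb2) as [f2 [Hf2a Hf2b]].
        { destruct Y as [|y Y']; [congruence|].
          assert (In y (filter (isin Y0) (a :: L'))).
          { apply in_isin. split. right. apply HY1. left; auto. apply HY0Y. left; auto. }
          assert (Hpos : 1 <= length (filter (isin Y0) (a :: L'))).
          { destruct (filter (isin Y0) (a :: L')); [inversion H|simpl; lia]. }
          pose proof (filter_length (isin Y0) (a :: L')).
          change (length (a :: L')) with (S (length L')) in H0.
          unfold isin in H0, Hpos. unfold R, notin. lia. }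
        { apply NoDup_filter. auto. }
        { intros Z HZ.
          assert (HZR : forall x, In x Z -> In x (a :: L') /\ ~ In x Y0).
          { intros x Hx. apply in_notin. apply HZ. auto. }
          assert (H1 : card (Z ++ Y0) <= card (flat_map nb (Z ++ Y0))).
          { apply HH. intros x Hx. apply in_app_iff in Hx. destruct Hx; [apply HZR; auto | apply HY0L; auto]. }
          rewrite card_app_disj in H1 by (intros x Hx; apply HZR; auto).
          rewrite flat_map_app in H1.
          assert (H2 : card (flat_map nb Z ++ NY) <= card (flat_map nb2 Z) + card NY).
          { etransitivity; [|apply card_app_le].
            apply card_incl. intros y Hy. apply in_app_iff in Hy. apply in_app_iff.
            destruct (in_dec dec y NY); [right; auto|]. left.
            destruct Hy as [Hy|Hy]; [|contradiction].
            apply in_flat_map in Hy. destruct Hy as [x [Hx Hy]]. apply in_flat_map.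
            exists x. split; auto. unfold nb2. apply in_notin. auto. }
          assert (H3 : card NY <= card Y0).
          { rewrite HcY0. etransitivity; [|exact HY3]. apply card_incl.
            intros y Hy. unfold NY in Hy. apply in_flat_map in Hy. destruct Hy as [x [Hx Hy]].
            apply in_flat_map. exists x. split; auto. apply HY0Y; auto. }
          unfold NY in *. lia. }
        exists (fun x => if in_dec dec x Y0 then f1 x else f2 x). split.
        -- intros x Hx. destruct (in_dec dec x Y0) as [Hin|Hin]; auto.
           assert (In x R) by (apply in_notin; auto).
           specialize (Hf2a x H). unfold nb2 in Hf2a. apply in_notin in Hf2a. tauto.
        -- intros x1 x2 Hx1 Hx2 Heq.
           destruct (in_dec dec x1 Y0) as [Hi1|Hi1]; destruct (in_dec dec x2 Y0) as [Hi2|Hi2].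
           ++ apply Hf1b; auto.
           ++ exfalso. assert (In x2 R) by (apply in_notin; auto).
              specialize (Hf2a x2 H). unfold nb2 in Hf2a. apply in_notin in Hf2a.
              apply Hf2a. rewrite <- Heq. unfold NY. apply in_flat_map. exists x1; auto.
           ++ exfalso. assert (In x1 R) by (apply in_notin; auto).
              specialize (Hf2a x1 H). unfold nb2 in Hf2a. apply in_notin in Hf2a.
              apply Hf2a. rewrite Heq. unfold NY. apply in_flat_map. exists x2; auto.
           ++ apply Hf2b; auto; apply in_notin; auto.
      *
        assert (Hsur : forall Y, incl Y L' -> Y <> [] -> card Y < card (flat_map nb Y)).
        { intros Y H1 H2. destruct (le_lt_dec (card (flat_map nb Y)) (card Y)); auto.
          exfalso. apply Hno. exists Y. auto. }
        assert (Ha : 1 <= card (nb a)).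
        { pose proof (HH [a] ltac:(intros x Hx; destruct Hx as [<-|[]]; left; auto)).
          simpl flat_map in H. rewrite app_nil_r in H. rewrite card_single in H. auto. }
        destruct (nb a) as [|b lb] eqn:Enb.
        { unfold card in Ha; simpl in Ha; lia. }
        set (nb' := fun x => filter (notin [b]) (nb x)).
        destruct (IH L' nb') as [f' [Hf'a Hf'b]].
        { lia. } { auto. }
        { intros Y HY. destruct Y as [|y Y']. { rewrite card_nil; lia. }
          pose proof (Hsur (y :: Y') HY ltac:(discriminate)).
          assert (card (flat_map nb (y :: Y')) <= card (flat_map nb' (y :: Y')) + card [b]).
          { etransitivity; [|apply card_app_le]. apply card_incl.
            intros z Hz. apply in_app_iff. destruct (dec z b) as [->|Hzb]; [right; left; auto|].
            left. apply in_flat_map in Hz. destruct Hz as [x [Hx Hz]]. apply in_flat_map.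
            exists x; split; auto. unfold nb'. apply in_notin. split; auto.
            intros [Hc|[]]; auto. }
          rewrite card_single in H0. lia. }
        exists (fun x => if dec x a then b else f' x). split.
        -- intros x Hx. destruct (dec x a) as [->|Hxa].
           ++ rewrite Enb. left; auto.
           ++ destruct Hx as [Hx|Hx]; [congruence|].
              specialize (Hf'a x Hx). unfold nb' in Hf'a. apply in_notin in Hf'a. tauto.
        -- intros x1 x2 Hx1 Hx2 Heq.
           destruct (dec x1 a) as [->|H1]; destruct (dec x2 a) as [->|H2]; auto.
           ++ destruct Hx2 as [Hx2|Hx2]; [congruence|].
              specialize (Hf'a x2 Hx2). unfold nb' in Hf'a. apply in_notin in Hf'a.
              exfalso. apply Hf'a. left. auto.
           ++ destruct Hx1 as [Hx1|Hx1]; [congruence|].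
              specialize (Hf'a x1 Hx1). unfold nb' in Hf'a. apply in_notin in Hf'a.
              exfalso. apply Hf'a. left. auto.
           ++ destruct Hx1 as [Hx1|Hx1]; [congruence|]. destruct Hx2 as [Hx2|Hx2]; [congruence|].
              apply Hf'b; auto.
Qed.

Theorem hall (b0 : B) (nb : A -> list B) (L : list A) :
  NoDup L -> HallCond nb L -> exists f, Matching nb L f.
Proof. intros. eapply hall_aux; eauto. Qed.

End Hall.

Section Grp.
Variables (G : Type) (mul : G -> G -> G) (inv : G -> G) (e : G).
Hypothesis HG : IsGroup mul inv e.

Lemma g_assoc x y z : mul x (mul y z) = mul (mul x y) z.
Proof. apply (grp_assoc _ _ _ HG). Qed.
Lemma g_idl x : mul e x = x. Proof. apply (grp_idl _ _ _ HG). Qed.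
Lemma g_idr x : mul x e = x. Proof. apply (grp_idr _ _ _ HG). Qed.
Lemma g_invl x : mul (inv x) x = e. Proof. apply (grp_invl _ _ _ HG). Qed.
Lemma g_invr x : mul x (inv x) = e. Proof. apply (grp_invr _ _ _ HG). Qed.

Lemma g_cancl x y : mul (inv x) (mul x y) = y.
Proof. rewrite g_assoc, g_invl, g_idl. auto. Qed.
Lemma g_cancl' x y : mul x (mul (inv x) y) = y.
Proof. rewrite g_assoc, g_invr, g_idl. auto. Qed.
Lemma g_cancr x y : mul (mul y x) (inv x) = y.
Proof. rewrite <- g_assoc, g_invr, g_idr. auto. Qed.
Lemma g_cancr' x y : mul (mul y (inv x)) x = y.
Proof. rewrite <- g_assoc, g_invl, g_idr. auto. Qed.
Lemma g_lcan x y z : mul x y = mul x z -> y = z.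
Proof. intros H. rewrite <- (g_cancl x y), H, g_cancl. auto. Qed.
Lemma g_rcan x y z : mul y x = mul z x -> y = z.
Proof. intros H. rewrite <- (g_cancr x y), H, g_cancr. auto. Qed.
Lemma g_invinv x : inv (inv x) = x.
Proof. apply (g_lcan (inv x)). rewrite g_invr, g_invl. auto. Qed.
Lemma g_invmul x y : inv (mul x y) = mul (inv y) (inv x).
Proof.
  apply (g_lcan (mul x y)). rewrite g_invr. rewrite <- g_assoc, (g_assoc y), g_invr, g_idl, g_invr. auto.
Qed.

End Grp.

Section Cay.
Variables (G : Type) (mul : G -> G -> G) (inv : G -> G) (e : G).
Hypothesis HG : IsGroup mul inv e.
Variable Sg : list G.
Hypothesis HS : Symmetric inv Sg.
Hypothesis Hgen : Generates mul inv e Sg.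
Hypothesis Hinf : InfiniteType G.

Notation "x * y" := (mul x y).
Notation adj := (cayley_adj mul Sg).

Definition nbr (X : list G) := flat_map (fun x => map (mul x) Sg) X.
Definition bd (X : list G) := filter (notin X) (nbr X).
Definition Cl (X : list G) := X ++ nbr X.
Fixpoint Cp (p : nat) (X : list G) : list G :=
  match p with O => X | S p' => Cp p' (Cl X) end.
Fixpoint ball (k : nat) : list G :=
  match k with O => [e] | S k' => ball k' ++ flat_map (fun s => map (mul s) (ball k')) Sg end.
Definition rmul (X T : list G) := flat_map (fun x => map (mul x) T) X.

Lemma in_nbr y X : In y (nbr X) <-> exists x s, In x X /\ In s Sg /\ y = x * s.
Proof.
  unfold nbr. rewrite in_flat_map. split.
  - intros [x [Hx Hy]]. apply in_map_iff in Hy. destruct Hy as [s [<- Hs]]. eauto.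
  - intros [x [s [Hx [Hs ->]]]]. exists x. split; auto. apply in_map. auto.
Qed.

Lemma in_rmul y X T : In y (rmul X T) <-> exists x t, In x X /\ In t T /\ y = x * t.
Proof.
  unfold rmul. rewrite in_flat_map. split.
  - intros [x [Hx Hy]]. apply in_map_iff in Hy. destruct Hy as [s [<- Hs]]. eauto.
  - intros [x [s [Hx [Hs ->]]]]. exists x. split; auto. apply in_map. auto.
Qed.

Lemma in_ballS t k : In t (ball (S k)) <-> In t (ball k) \/ exists s t', In s Sg /\ In t' (ball k) /\ t = s * t'.
Proof.
  simpl. rewrite in_app_iff, in_flat_map. split.
  - intros [H|[s [Hs H]]]; auto. apply in_map_iff in H. destruct H as [t' [<- Ht']]. right; eauto.
  - intros [H|[s [t' [Hs [Ht' ->]]]]]; auto. right. exists s. split; auto. apply in_map; auto.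
Qed.

Lemma ball_e k : In e (ball k).
Proof. induction k; simpl; auto. apply in_app_iff; auto. Qed.

Lemma ball_mono i j : i <= j -> incl (ball i) (ball j).
Proof.
  induction 1; intros t Ht; auto. apply in_ballS. left. auto.
Qed.

Lemma ball_prefix i j : i <= j -> exists s, ball j = ball i ++ s.
Proof.
  induction 1. exists []. rewrite app_nil_r; auto.
  destruct IHle as [s Hs]. simpl. rewrite Hs. eexists. rewrite <- app_assoc. eauto.
Qed.

Lemma card_Cl X : card (Cl X) = card X + card (bd X).
Proof.
  rewrite <- card_app_disj.
  - apply card_ext. intros x. unfold Cl, bd. rewrite !in_app_iff, in_notin.
    destruct (in_dec dec x X); tauto.
  - intros x H1 H2. unfold bd in H2. apply in_notin in H2. tauto.
Qed.

Lemma Cp_incl p X : incl X (Cp p X).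
Proof.
  revert X; induction p; intros X x Hx; simpl; auto.
  apply IHp. unfold Cl. apply in_app_iff. auto.
Qed.

Lemma Cp_sub p X y : In y (Cp p X) -> exists x t, In x X /\ In t (ball p) /\ y = x * t.
Proof.
  revert X y; induction p; intros X y Hy; simpl in Hy.
  - exists y, e. split; auto. split. simpl; auto. rewrite (g_idr _ _ _ _ HG); auto.
  - destruct (IHp _ _ Hy) as [z [t [Hz [Ht ->]]]].
    unfold Cl in Hz. apply in_app_iff in Hz. destruct Hz as [Hz|Hz].
    + exists z, t. split; auto. split; auto. apply in_ballS; auto.
    + apply in_nbr in Hz. destruct Hz as [x [s [Hx [Hs ->]]]].
      exists x, (s * t). split; auto. split. apply in_ballS. right. eauto.
      rewrite (g_assoc _ _ _ _ HG); auto.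
Qed.

Lemma dist_le_mono k u v : dist_le adj k u v -> dist_le adj (S k) u v.
Proof.
  revert u; induction k; intros u H; simpl in *.
  - left; auto.
  - destruct H as [H|[w [Hw H]]]; auto. right. exists w. split; auto.
Qed.

Lemma dist_ball k t x : In t (ball k) -> dist_le adj k x (x * t).
Proof.
  revert t x; induction k; intros t x Ht.
  - simpl in Ht. destruct Ht as [<-|[]]. simpl. rewrite (g_idr _ _ _ _ HG); auto.
  - apply in_ballS in Ht. destruct Ht as [Ht|[s [t' [Hs [Ht' ->]]]]].
    + apply dist_le_mono. auto.
    + rewrite (g_assoc _ _ _ _ HG). destruct (dec x (x * s)) as [Hx|Hx].
      * rewrite <- Hx. apply dist_le_mono. auto.
      * simpl. right. exists (x * s). split; auto. split; eauto.
Qed.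

Lemma closed_words (X : list G) : (forall y s, In y X -> In s Sg -> In (y * s) X) ->
  forall l, Forall (fun t => In t Sg \/ In (inv t) Sg) l -> forall y, In y X -> In (y * fold_right mul e l) X.
Proof.
  intros HX l Hl. induction Hl as [|t l Ht Hl IH]; intros y Hy; simpl.
  - rewrite (g_idr _ _ _ _ HG); auto.
  - rewrite (g_assoc _ _ _ _ HG). apply IH. apply HX; auto.
    destruct Ht as [Ht|Ht]; auto. apply HS in Ht. rewrite (g_invinv _ _ _ _ HG) in Ht; auto.
Qed.

Lemma bd_pos X x : In x X -> 1 <= card (bd X).
Proof.
  intros Hx. destruct (le_lt_dec 1 (card (bd X))) as [H|H]; auto. exfalso.
  assert (Hb : bd X = []) by (apply card_zero; lia).
  assert (HX : forall y s, In y X -> In s Sg -> In (y * s) X).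
  { intros y s Hy Hs. destruct (in_dec dec (y * s) X) as [|Hn]; auto.
    assert (In (y * s) (bd X)). { unfold bd. apply in_notin. split; auto. apply in_nbr. eauto. }
    rewrite Hb in H0. inversion H0. }
  apply Hinf. exists X. intros g.
  destruct (Hgen (inv x * g)) as [l [Hl Heq]].
  pose proof (closed_words X HX l Hl x Hx). rewrite <- Heq in H0. rewrite (g_cancl' _ _ _ _ HG) in H0. auto.
Qed.

Lemma S_nonempty : Sg <> [].
Proof.
  intros HS0. apply Hinf. exists [e]. intros g. destruct (Hgen g) as [l [Hl Heq]].
  destruct l as [|t l]. simpl in Heq. left; auto.
  inversion Hl as [|? ? H1 H2]. rewrite HS0 in H1. simpl in H1. tauto.
Qed.

Lemma length_ball i : i < length (ball i).
Proof.
  pose proof S_nonempty as HSn.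
  induction i. simpl; lia.
  simpl. rewrite length_app. destruct Sg as [|s S'] eqn:E. exfalso; apply HSn; auto.
  simpl. rewrite length_app, length_map. lia.
Qed.

End Cay.

Section Fol.
Variables (G : Type) (mul : G -> G -> G) (inv : G -> G) (e : G).
Hypothesis HG : IsGroup mul inv e.
Variable Sg : list G.
Hypothesis HS : Symmetric inv Sg.
Hypothesis Hgen : Generates mul inv e Sg.
Hypothesis Hinf : InfiniteType G.

Notation bd := (bd G mul Sg).
Notation Cl := (Cl G mul Sg).
Notation Cp := (Cp G mul Sg).
Notation ball := (ball G mul e Sg).
Notation rmul := (rmul G mul).

Lemma binom_ineq N p : N * (N + 1) ^ p >= N ^ (S p) + p * N ^ p.
Proof.
  induction p; simpl; [lia|].
  assert (N * ((N+1) * (N+1)^p) = (N+1) * (N * (N+1)^p)) by ring.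
  rewrite H. assert ((N+1) * (N * (N+1)^p) >= (N+1) * (N^(S p) + p * N^p)).
  { apply Nat.mul_le_mono_l. auto. }
  simpl in *. nia.
Qed.

Lemma doubling N : (forall X, X <> [] -> card X <= N * card (bd X)) ->
  forall Z, 2 * card Z <= card (rmul Z (ball N)).
Proof.
  intros HN.
  assert (HN1 : 1 <= N).
  { pose proof (HN [e] ltac:(discriminate)). rewrite card_single in H. destruct N; simpl in H; lia. }
  assert (Hit : forall p X, X <> [] -> N ^ p * card (Cp p X) >= (N+1)^p * card X).
  { induction p; intros X HX; simpl Cp.
    - simpl. lia.
    - assert (HC : Cl X <> []).
      { destruct X; [congruence|]. unfold Cl. simpl. discriminate. }
      specialize (IHp _ HC).
      assert (H2 : N * card (Cl X) >= (N+1) * card X).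
      { rewrite card_Cl. specialize (HN X HX). nia. }
      rewrite Nat.pow_succ_r', Nat.pow_succ_r'.
      assert (N * (N^p * card (Cp p (Cl X))) >= N * ((N+1)^p * card (Cl X))).
      { apply Nat.mul_le_mono_l. auto. }
      nia. }
  intros Z. destruct Z as [|z Z']. { unfold card at 1; simpl; lia. }
  set (Z := z :: Z').
  specialize (Hit N Z ltac:(discriminate)).
  pose proof (binom_ineq N N).
  assert (Hb : (N+1)^N >= 2 * N^N).
  { simpl in H. apply (Nat.mul_le_mono_pos_l _ _ N); lia. }
  assert (HNN : N ^ N >= 1). { pose proof (Nat.pow_nonzero N N). lia. }
  assert (Hc : card (Cp N Z) >= 2 * card Z).
  { assert (N^N * card (Cp N Z) >= N^N * (2 * card Z)) by nia.
    apply (Nat.mul_le_mono_pos_l _ _ (N^N)); lia. }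
  eapply Nat.le_trans; [apply Hc|]. apply card_incl. intros y Hy.
  apply (Cp_sub G mul inv e HG) in Hy. destruct Hy as [x [t [Hx [Ht ->]]]].
  apply in_rmul. eauto.
Qed.

Lemma harem (T : list G) : (forall Z, 2 * card Z <= card (rmul Z T)) ->
  forall X, exists f : G * bool -> G,
    (forall x b, In x X -> In (f (x, b)) (map (mul x) T)) /\
    (forall x y b b', In x X -> In y X -> f (x, b) = f (y, b') -> x = y /\ b = b').
Proof.
  intros HT X.
  set (L := nodup dec (list_prod X [true; false])).
  destruct (hall (G * bool) G e (fun p => map (mul (fst p)) T) L) as [f [Hf1 Hf2]].
  - apply NoDup_nodup.
  - intros Y HY.
    assert (H1 : card Y <= 2 * card (map fst Y)).
    { transitivity (card (list_prod (nodup dec (map fst Y)) [true; false])).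
      - apply card_incl. intros [x b] Hxb. apply in_prod.
        apply nodup_In. apply (in_map fst) in Hxb. auto. destruct b; simpl; auto.
      - etransitivity. apply card_le_length. rewrite length_prod. simpl. unfold card. lia. }
    etransitivity; [apply H1|]. etransitivity; [apply HT|].
    apply card_incl. intros y Hy. apply in_rmul in Hy. destruct Hy as [x [t [Hx [Ht ->]]]].
    apply in_map_iff in Hx. destruct Hx as [[x' b] [Hx' Hxb]]. simpl in Hx'. subst x'.
    apply in_flat_map. exists (x, b). split; auto. simpl. apply in_map. auto.
  - exists (fun p => f p). split.
    + intros x b Hx. apply (Hf1 (x, b)). unfold L. apply nodup_In. apply in_prod; auto.
      destruct b; simpl; auto.
    + intros x y b b' Hx Hy Heq. apply Hf2 in Heq.
      * inversion Heq; auto.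
      * unfold L. apply nodup_In. apply in_prod; auto. destruct b; simpl; auto.
      * unfold L. apply nodup_In. apply in_prod; auto. destruct b'; simpl; auto.
Qed.

End Fol.

Definition pk {X} (b : bool) (p : X * X) : X := if b then fst p else snd p.

Lemma min_exists (P : nat -> Prop) : (exists n, P n) -> exists n, P n /\ forall j, j < n -> ~ P j.
Proof.
  intros [n Hn]. revert Hn. induction n as [n IH] using lt_wf_ind. intros Hn.
  destruct (classic (exists j, j < n /\ P j)) as [[j [Hj1 Hj2]]|Hno].
  - apply (IH j); auto.
  - exists n. split; auto. intros j Hj HP. apply Hno. eauto.
Qed.

Lemma finite_bound {X} (L : list X) (P : X -> nat -> Prop) :
  (forall c, In c L -> exists M, forall n, M <= n -> P c n) ->
  exists M, forall c, In c L -> forall n, M <= n -> P c n.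
Proof.
  induction L as [|a L IH]; intros H.
  - exists 0. intros c [].
  - destruct (H a (or_introl eq_refl)) as [Ma HMa].
    destruct IH as [M HM]. { intros c Hc. apply H. right; auto. }
    exists (Ma + M). intros c [<-|Hc] n Hn; [apply HMa | apply HM]; auto; lia.
Qed.

Section Comp.
Variables (G : Type) (mul : G -> G -> G) (inv : G -> G) (e : G).
Hypothesis HG : IsGroup mul inv e.
Variable Sg : list G.
Hypothesis HS : Symmetric inv Sg.
Hypothesis Hgen : Generates mul inv e Sg.
Hypothesis Hinf : InfiniteType G.
Variable T : list G.
Hypothesis HT : forall Z, 2 * card Z <= card (rmul G mul Z T).

Notation ball := (ball G mul e Sg).

Definition en (i : nat) : G := nth i (ball i) e.

Lemma word_ball l : Forall (fun t => In t Sg \/ In (inv t) Sg) l -> In (fold_right mul e l) (ball (length l)).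
Proof.
  induction 1 as [|t l Ht Hl IH]; simpl. auto.
  rewrite in_app_iff. right. apply in_flat_map. exists t. split.
  - destruct Ht as [Ht|Ht]; auto. apply HS in Ht. rewrite (g_invinv _ _ _ _ HG) in Ht. auto.
  - apply in_map. auto.
Qed.

Lemma en_surj g : exists i, en i = g.
Proof.
  destruct (Hgen g) as [l [Hl ->]]. apply word_ball in Hl.
  set (n := length l) in *. apply In_nth with (d := e) in Hl. destruct Hl as [p [Hp Hnth]].
  exists p. unfold en. destruct (le_lt_dec n p) as [Hnp|Hnp].
  - destruct (ball_prefix G mul e Sg n p Hnp) as [s Hs]. rewrite Hs, app_nth1; auto.
  - destruct (ball_prefix G mul e Sg p n ltac:(lia)) as [s Hs]. rewrite Hs in Hnth.
    rewrite app_nth1 in Hnth; auto. apply (length_ball G mul inv e Sg HS Hgen Hinf).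
Qed.

Definition fresh i := forall j, j < i -> en j <> en i.

Lemma fresh_neq i j : fresh i -> fresh j -> i <> j -> en i <> en j.
Proof.
  intros Hi Hj Hij. destruct (le_lt_dec i j).
  - apply Hj. lia.
  - intros H. apply (Hi j); auto.
Qed.

Definition Cc := list_prod T T.

Definition valid n (h : nat -> G * G) :=
  (forall i, i < n -> In (h i) Cc) /\
  (forall i j b b', i < n -> j < n -> fresh i -> fresh j -> (i <> j \/ b <> b') ->
      mul (en i) (pk b (h i)) <> mul (en j) (pk b' (h j))).

Lemma exist_valid n : exists h, valid n h.
Proof.
  destruct (harem G mul e T HT (map en (seq 0 n))) as [f [Hf1 Hf2]].
  exists (fun i => (mul (inv (en i)) (f (en i, true)), mul (inv (en i)) (f (en i, false)))).
  assert (Hin : forall i, i < n -> In (en i) (map en (seq 0 n))).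
  { intros i Hi. apply in_map. apply in_seq. lia. }
  split.
  - intros i Hi. unfold Cc. apply in_prod.
    + specialize (Hf1 (en i) true (Hin i Hi)). apply in_map_iff in Hf1. destruct Hf1 as [t [Ht1 Ht2]].
      rewrite <- Ht1, (g_cancl _ _ _ _ HG). auto.
    + specialize (Hf1 (en i) false (Hin i Hi)). apply in_map_iff in Hf1. destruct Hf1 as [t [Ht1 Ht2]].
      rewrite <- Ht1, (g_cancl _ _ _ _ HG). auto.
  - intros i j b b' Hi Hj Fi Fj Hne Heq.
    assert (Heq' : f (en i, b) = f (en j, b')).
    { destruct b, b'; simpl in Heq; rewrite !(g_cancl' _ _ _ _ HG) in Heq; auto. }
    apply Hf2 in Heq'; auto. destruct Heq' as [H1 H2].
    destruct Hne as [Hne|Hne]; [|contradiction]. apply (fresh_neq i j); auto.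
Qed.

Definition hs (n : nat) : nat -> G * G := proj1_sig (constructive_indefinite_description _ (exist_valid n)).
Lemma hs_valid n : valid n (hs n).
Proof. unfold hs. destruct (constructive_indefinite_description _ _). auto. Qed.

Definition agree (p : list (G * G)) (h : nat -> G * G) := forall i, i < length p -> h i = nth i p (e, e).
Definition Inf p := forall M, exists n, M <= n /\ agree p (hs n).

Lemma Inf_step p : Inf p -> exists c, Inf (p ++ [c]).
Proof.
  intros HI. apply NNPP. intros Hno.
  assert (H1 : forall c, In c Cc -> exists M, forall n, M <= n -> ~ agree (p ++ [c]) (hs n)).
  { intros c _. apply NNPP. intros H2. apply Hno. exists c. intros M.
    apply NNPP. intros H3. apply H2. exists M. intros n Hn Ha. apply H3. eauto. }
  destruct (finite_bound Cc _ H1) as [M0 HM0].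
  destruct (HI (M0 + S (length p))) as [n [Hn Ha]].
  set (c := hs n (length p)).
  assert (Hc : In c Cc). { apply (proj1 (hs_valid n)). lia. }
  apply (HM0 c Hc n ltac:(lia)).
  intros i Hi. rewrite length_app in Hi. simpl in Hi.
  destruct (le_lt_dec (length p) i).
  - assert (i = length p) by lia. subst i. rewrite nth_middle. auto.
  - rewrite app_nth1; auto.
Qed.

Definition step (p : list (G * G)) : G * G := epsilon (inhabits (e, e)) (fun c => Inf (p ++ [c])).
Fixpoint pref (i : nat) : list (G * G) :=
  match i with O => [] | S i' => pref i' ++ [step (pref i')] end.

Lemma pref_Inf i : Inf (pref i).
Proof.
  induction i; simpl.
  - intros M. exists M. split; auto. intros i Hi. simpl in Hi. lia.
  - unfold step. apply epsilon_spec. apply Inf_step. auto.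
Qed.

Lemma pref_len i : length (pref i) = i.
Proof. induction i; simpl; auto. rewrite length_app; simpl; lia. Qed.

Lemma pref_prefix i j : i <= j -> exists s, pref j = pref i ++ s.
Proof.
  induction 1. exists []. rewrite app_nil_r; auto.
  destruct IHle as [s Hs]. simpl. rewrite Hs. eexists. rewrite <- app_assoc. eauto.
Qed.

Definition Hg (i : nat) : G * G := nth i (pref (S i)) (e, e).

Lemma pref_nth i j : i < j -> nth i (pref j) (e, e) = Hg i.
Proof.
  intros H. destruct (pref_prefix (S i) j H) as [s Hs]. rewrite Hs. unfold Hg.
  rewrite app_nth1; auto. rewrite pref_len; lia.
Qed.

Lemma Hg_valid i j b b' : fresh i -> fresh j -> (i <> j \/ b <> b') ->
  mul (en i) (pk b (Hg i)) <> mul (en j) (pk b' (Hg j)).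
Proof.
  intros Fi Fj Hne.
  destruct (pref_Inf (S (i + j)) (S (i + j))) as [n [Hn Ha]].
  assert (E1 : hs n i = Hg i). { rewrite Ha. apply pref_nth. lia. rewrite pref_len. lia. }
  assert (E2 : hs n j = Hg j). { rewrite Ha. apply pref_nth. lia. rewrite pref_len. lia. }
  rewrite <- E1, <- E2. apply (proj2 (hs_valid n)); auto; lia.
Qed.

Lemma Hg_in i : In (Hg i) Cc.
Proof.
  destruct (pref_Inf (S i) (S i)) as [n [Hn Ha]].
  assert (E1 : hs n i = Hg i). { rewrite Ha. apply pref_nth. lia. rewrite pref_len. lia. }
  rewrite <- E1. apply (proj1 (hs_valid n)). lia.
Qed.

Definition idx (x : G) : nat := epsilon (inhabits 0) (fun i => en i = x /\ fresh i).

Lemma idx_spec x : en (idx x) = x /\ fresh (idx x).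
Proof.
  unfold idx. apply epsilon_spec.
  destruct (min_exists (fun i => en i = x) (en_surj x)) as [i [Hi Hmin]].
  exists i. split; auto. intros j Hj Heq. apply (Hmin j Hj). congruence.
Qed.

Theorem global_harem : exists F : G -> G * G,
  (forall x, In (fst (F x)) T /\ In (snd (F x)) T) /\
  (forall x y b b', (x <> y \/ b <> b') -> mul x (pk b (F x)) <> mul y (pk b' (F y))).
Proof.
  exists (fun x => Hg (idx x)). split.
  - intros x. pose proof (Hg_in (idx x)). unfold Cc in H. destruct (Hg (idx x)).
    apply in_prod_iff in H. auto.
  - intros x y b b' Hne. destruct (idx_spec x) as [E1 F1]. destruct (idx_spec y) as [E2 F2].
    rewrite <- E1 at 1. rewrite <- E2 at 1. apply Hg_valid; auto.
    destruct Hne as [Hne|Hne]; auto. left. intros Hij. apply Hne. rewrite <- E1, <- E2, Hij. auto.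
Qed.

End Comp.

Section Mean.
Variables (G : Type) (mul : G -> G -> G) (inv : G -> G) (e : G).
Hypothesis HG : IsGroup mul inv e.
Variable m : (G -> Prop) -> R.
Hypothesis Hm0 : forall A, (0 <= m A)%R.
Hypothesis Hm1 : m (fun _ => True) = 1%R.
Hypothesis Hmadd : forall A B, (forall x, ~ (A x /\ B x)) -> m (fun x => A x \/ B x) = (m A + m B)%R.
Hypothesis Hminv : forall g A, m (fun x => A (mul (inv g) x)) = m A.

Definition nu (P : G -> Prop) : R := m (fun x => P (inv x)).

Lemma nu_ext P Q : (forall x, P x <-> Q x) -> nu P = nu Q.
Proof.
  intros H. f_equal. apply functional_extensionality. intros x. apply propositional_extensionality. auto.
Qed.

Lemma nu_add P Q : (forall x, ~ (P x /\ Q x)) -> nu (fun x => P x \/ Q x) = (nu P + nu Q)%R.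
Proof. intros H. unfold nu. apply Hmadd. intros x. apply H. Qed.

Lemma nu_full : nu (fun _ => True) = 1%R.
Proof. exact Hm1. Qed.

Lemma nu_nonneg P : (0 <= nu P)%R.
Proof. apply Hm0. Qed.

Lemma nu_rinv P t : nu (fun y => P (mul y t)) = nu P.
Proof.
  unfold nu. rewrite <- (Hminv t (fun z => P (inv z))). f_equal.
  apply functional_extensionality. intros x.
  rewrite (g_invmul _ _ _ _ HG), (g_invinv _ _ _ _ HG). auto.
Qed.

Lemma nu_empty : nu (fun _ => False) = 0%R.
Proof.
  assert (nu (fun x => False \/ False) = (nu (fun _ => False) + nu (fun _ => False))%R).
  { apply nu_add. tauto. }
  rewrite (nu_ext (fun x => False \/ False) (fun _ => False)) in H by tauto. lra.
Qed.

Lemma nu_le1 P : (nu P <= 1)%R.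
Proof.
  assert (nu (fun x => P x \/ ~ P x) = (nu P + nu (fun x => ~ P x))%R).
  { apply nu_add. tauto. }
  rewrite (nu_ext (fun x => P x \/ ~ P x) (fun _ => True)) in H by (intros; split; auto; intros; apply classic).
  rewrite nu_full in H. pose proof (nu_nonneg (fun x => ~ P x)). lra.
Qed.

Definition sumR (l : list R) : R := fold_right Rplus 0%R l.

Lemma nu_union (L : list G) (Q : G -> G -> Prop) : NoDup L ->
  (forall t t' x, In t L -> In t' L -> t <> t' -> Q t x -> Q t' x -> False) ->
  nu (fun x => exists t, In t L /\ Q t x) = sumR (map (fun t => nu (Q t)) L).
Proof.
  induction L as [|a L IH]; intros Hnd Hdis; simpl.
  - rewrite <- nu_empty. apply nu_ext. intros x. split; [intros [t [[] _]] | tauto].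
  - rewrite <- IH.
    + rewrite <- nu_add.
      * apply nu_ext. intros x. split.
        -- intros [t [[<-|Ht] Hq]]; [left; auto | right; eauto].
        -- intros [Hq|[t [Ht Hq]]]; eauto.
      * intros x [Hq [t [Ht Hq']]]. inversion Hnd; subst.
        apply (Hdis a t x); auto. left; auto. right; auto. intros <-. contradiction.
    + inversion Hnd; auto.
    + intros t t' x Ht Ht'. apply Hdis; right; auto.
Qed.

Lemma mean_no_harem (T : list G) (F : G -> G * G) :
  (forall x, In (fst (F x)) T /\ In (snd (F x)) T) ->
  (forall x y b b', (x <> y \/ b <> b') -> mul x (pk b (F x)) <> mul y (pk b' (F y))) -> False.
Proof.
  intros HF1 HF2.
  set (Tn := nodup dec T).
  assert (HTn : forall t, In t Tn <-> In t T) by (intros; apply nodup_In).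
  assert (Him : forall b, nu (fun y => exists x, y = mul x (pk b (F x))) = 1%R).
  { intros b.
    assert (HpkT : forall x, In (pk b (F x)) T) by (intros x; destruct b; simpl; apply HF1).
    transitivity (nu (fun y => exists t, In t Tn /\ (fun t y => pk b (F (mul y (inv t))) = t) t y)).
    { apply nu_ext. intros y. split.
      - intros [x ->]. exists (pk b (F x)). split. apply HTn; auto.
        rewrite (g_cancr _ _ _ _ HG). auto.
      - intros [t [Ht Heq]]. exists (mul y (inv t)). rewrite Heq, (g_cancr' _ _ _ _ HG). auto. }
    rewrite nu_union.
    2: apply NoDup_nodup.
    2: { intros t t' y Ht Ht' Hne H1 H2. simpl in H1, H2.
         set (x := mul y (inv t)) in *. set (x' := mul y (inv t')) in *.
         assert (Ey : mul x t = mul x' t').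
         { unfold x, x'. rewrite !(g_cancr' _ _ _ _ HG). auto. }
         destruct (dec x x') as [Exx|Exx].
         - apply Hne. rewrite <- H1, <- H2, Exx. auto.
         - apply (HF2 x x' b b (or_introl Exx)). rewrite H1, H2. auto. }
    transitivity (sumR (map (fun t => nu (fun x => pk b (F x) = t)) Tn)).
    { f_equal. apply map_ext_in. intros t Ht.
      apply (nu_rinv (fun x => pk b (F x) = t) (inv t)). }
    rewrite <- nu_union.
    - rewrite <- nu_full. apply nu_ext. intros x. split; auto. intros _.
      exists (pk b (F x)). split; auto. apply HTn; auto.
    - apply NoDup_nodup.
    - intros t t' x _ _ Hne H1 H2. apply Hne. rewrite <- H1. exact H2. }
  assert (H2 : nu (fun y => (exists x, y = mul x (pk true (F x))) \/ (exists x, y = mul x (pk false (F x)))) = 2%R).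
  { rewrite (nu_add (fun y => exists x, y = mul x (pk true (F x))) (fun y => exists x, y = mul x (pk false (F x)))).
    rewrite (Him true), (Him false). clear. lra.
    intros y [[x Hx] [x' Hx']].
    exact (HF2 x x' true false (or_intror (fun H : true = false => ltac:(discriminate H))) (eq_trans (eq_sym Hx) Hx')). }
  pose proof (nu_le1 (fun y => (exists x, y = mul x (pk true (F x))) \/ (exists x, y = mul x (pk false (F x))))).
  rewrite H2 in H. lra.
Qed.

End Mean.

Section Greedy.
Variable X : Type.
Fixpoint greedy (Ms cs : list (X * X)) : list (X * X) :=
  match cs with
  | [] => Ms
  | c :: cs' => if inb (fst c) (map fst Ms) || inb (snd c) (map snd Ms)
                then greedy Ms cs' else greedy (c :: Ms) cs'
  end.

Lemma greedy_sub Ms cs p : In p (greedy Ms cs) -> In p Ms \/ In p cs.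
Proof.
  revert Ms; induction cs as [|c cs IH]; intros Ms H; simpl in H; auto.
  destruct (inb (fst c) (map fst Ms) || inb (snd c) (map snd Ms)).
  - destruct (IH _ H); simpl; auto.
  - destruct (IH _ H) as [[<-|H']|H']; simpl; auto.
Qed.

Lemma greedy_incl Ms cs : incl Ms (greedy Ms cs).
Proof.
  revert Ms; induction cs as [|c cs IH]; intros Ms; simpl; [intros ? ?; auto|].
  destruct (inb (fst c) (map fst Ms) || inb (snd c) (map snd Ms)); auto.
  intros p Hp. apply IH. right; auto.
Qed.

Lemma greedy_nodup Ms cs : NoDup (map fst Ms) -> NoDup (map snd Ms) ->
  NoDup (map fst (greedy Ms cs)) /\ NoDup (map snd (greedy Ms cs)).
Proof.
  revert Ms; induction cs as [|c cs IH]; intros Ms H1 H2; simpl; auto.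
  destruct (inb (fst c) (map fst Ms)) eqn:E1; simpl; auto.
  destruct (inb (snd c) (map snd Ms)) eqn:E2; simpl; auto.
  apply inb_false in E1. apply inb_false in E2.
  apply IH; simpl; constructor; auto.
Qed.

Lemma greedy_max Ms cs c : In c cs ->
  In (fst c) (map fst (greedy Ms cs)) \/ In (snd c) (map snd (greedy Ms cs)).
Proof.
  revert Ms; induction cs as [|c' cs IH]; intros Ms H; [inversion H|].
  simpl. destruct H as [->|H].
  - destruct (inb (fst c) (map fst Ms)) eqn:E1; simpl.
    + apply inb_true in E1. left. apply in_map_iff in E1. destruct E1 as [p [Hp1 Hp2]].
      rewrite <- Hp1. apply in_map. apply greedy_incl. auto.
    + destruct (inb (snd c) (map snd Ms)) eqn:E2; simpl.
      * apply inb_true in E2. right. apply in_map_iff in E2. destruct E2 as [p [Hp1 Hp2]].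
        rewrite <- Hp1. apply in_map. apply greedy_incl. auto.
      * left. apply in_map. apply greedy_incl. left; auto.
  - destruct (inb (fst c') (map fst Ms) || inb (snd c') (map snd Ms)); apply IH; auto.
Qed.

Definition lookup (Ms : list (X * X)) (u : X) : X :=
  match find (fun p => if dec (fst p) u then true else false) Ms with
  | Some p => snd p | None => u end.

Lemma lookup_spec Ms p : NoDup (map fst Ms) -> In p Ms -> lookup Ms (fst p) = snd p.
Proof.
  induction Ms as [|p' Ms IH]; intros Hnd Hp; [inversion Hp|].
  unfold lookup; simpl. destruct (dec (fst p') (fst p)) as [E|E].
  - destruct Hp as [<-|Hp]; auto. exfalso. inversion Hnd. apply H1. rewrite E. apply in_map; auto.
  - destruct Hp as [<-|Hp]; [congruence|]. apply IH; auto. inversion Hnd; auto.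
Qed.

End Greedy.

Lemma nodup_map_inj {A B} (f : A -> B) l x y : NoDup (map f l) -> In x l -> In y l -> f x = f y -> x = y.
Proof.
  induction l as [|a l IH]; intros Hnd Hx Hy Hf; [inversion Hx|].
  simpl in Hnd. inversion Hnd; subst.
  destruct Hx as [<-|Hx]; destruct Hy as [<-|Hy]; auto.
  - exfalso. apply H1. rewrite Hf. apply in_map; auto.
  - exfalso. apply H1. rewrite <- Hf. apply in_map; auto.
Qed.

Lemma last_indep {A} (a d d' : A) l : last (a :: l) d = last (a :: l) d'.
Proof. revert a; induction l as [|b l IH]; intros a; [reflexivity|].
  change (last (b :: l) d = last (b :: l) d'). apply IH. Qed.

Lemma last_cons {A} (y u : A) l : last (y :: l) u = last l y.
Proof. destruct l; [reflexivity|]. change (last (a :: l) u = last (a :: l) y). apply last_indep. Qed.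

Section Main.
Variables (G : Type) (mul : G -> G -> G) (inv : G -> G) (e : G).
Hypothesis HG : IsGroup mul inv e.
Variable Sg : list G.
Hypothesis HS : Symmetric inv Sg.
Hypothesis Hgen : Generates mul inv e Sg.
Hypothesis Hinf : InfiniteType G.
Hypothesis Ham : Amenable mul inv.

Notation bd := (bd G mul Sg).
Notation Cl := (Cl G mul Sg).
Notation Cp := (Cp G mul Sg).
Notation ball := (ball G mul e Sg).
Notation adj := (cayley_adj mul Sg).

Lemma folner N : exists X, X <> [] /\ N * card (bd X) < card X.
Proof.
  apply NNPP. intros Hno.
  assert (HN : forall X, X <> [] -> card X <= N * card (bd X)).
  { intros X HX. destruct (le_lt_dec (card X) (N * card (bd X))); auto.
    exfalso. apply Hno. eauto. }
  pose proof (doubling G mul inv e HG Sg N HN) as HT.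
  destruct (global_harem G mul inv e HG Sg HS Hgen Hinf _ HT) as [F [HF1 HF2]].
  destruct Ham as [m [Hm0 [Hm1 [Hmadd Hminv]]]].
  exact (mean_no_harem G mul inv e HG m Hm0 Hm1 Hmadd Hminv _ F HF1 HF2).
Qed.

Lemma descent q : forall b n, (exists X, n <= card X /\ card (bd X) <= b) -> 2 * q * b < n ->
  exists A n0, n0 <= card A /\ q * card (bd A) < n0 /\
    forall X, n0 - q * card (bd A) <= card X -> card (bd A) <= 2 * card (bd X).
Proof.
  induction b as [b IH] using lt_wf_ind. intros n [X [HX1 HX2]] Hn.
  destruct (classic (exists X', n <= card X' /\ card (bd X') < b)) as [[X' [H1 H2]]|Hc1].
  - apply (IH (card (bd X')) H2 n). exists X'; auto. nia.
  - assert (Hb : card (bd X) = b).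
    { destruct (le_lt_dec b (card (bd X))); [lia|]. exfalso. apply Hc1. eauto. }
    destruct (classic (forall X1, n - q * b <= card X1 -> b <= 2 * card (bd X1))) as [Hall|Hc2].
    + exists X, n. rewrite Hb. split; auto. split; auto. nia.
    + apply not_all_ex_not in Hc2. destruct Hc2 as [X1 HX1'].
      apply imply_to_and in HX1'. destruct HX1' as [H1 H2].
      apply (IH (card (bd X1)) ltac:(lia) (n - q * b)). exists X1; auto. nia.
Qed.

Lemma cross (A : list G) : forall l u, chain adj u l -> In u A -> ~ In (last l u) A ->
  exists x, In x (u :: l) /\ In x (bd A).
Proof.
  induction l as [|y l IH]; intros u Hc Hu Hl.
  - simpl in Hl. contradiction.
  - rewrite last_cons in Hl. destruct Hc as [Hadj Hc].
    destruct (in_dec dec y A) as [Hy|Hy].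
    + destruct (IH y Hc Hy Hl) as [x [Hx1 Hx2]]. exists x. split; auto. right; auto.
    + exists y. split. right; left; auto.
      destruct Hadj as [_ [s [Hs ->]]]. unfold bd. apply in_notin. split; auto.
      apply in_nbr. eauto.
Qed.

Lemma layers (beta n1 : nat) (Hq : forall X, n1 <= card X -> beta <= 2 * card (bd X)) :
  forall j Z, n1 <= card Z -> 2 * card (Cp j Z) >= 2 * card Z + j * beta.
Proof.
  induction j; intros Z HZ; simpl Cp. lia.
  assert (HC := card_Cl G mul Sg Z). specialize (Hq Z HZ).
  specialize (IHj (Cl Z) ltac:(lia)). lia.
Qed.

Theorem ufo_exists (m r : nat) : exists U F O, UFO adj m (4 * (m + 1) + 2) r U F O.
Proof.
  set (q := 2 * (m + 1)). set (k := 4 * (m + 1) + 2).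
  destruct (folner (2 * q)) as [X0 [HX0a HX0b]].
  destruct (descent q (card (bd X0)) (card X0)) as [A [n0 [HA1 [HA2 HA3]]]].
  { exists X0. auto. } { lia. }
  set (beta := card (bd A)) in *.
  assert (Hbeta : 1 <= beta).
  { destruct A as [|a A']. { unfold card in HA1. simpl in HA1. lia. }
    apply (bd_pos G mul inv e HG Sg HS Hgen Hinf _ a). left; auto. }
  set (Cands := filter (fun p => notin A (snd p) && notin (bd A) (snd p))
                  (flat_map (fun x => map (fun t => (x, mul x t)) (ball k)) A)).
  assert (HCands : forall p, In p Cands ->
            In (fst p) A /\ ~ In (snd p) A /\ ~ In (snd p) (bd A) /\
            exists t, In t (ball k) /\ snd p = mul (fst p) t).
  { intros p Hp. unfold Cands in Hp. apply filter_In in Hp. destruct Hp as [Hp1 Hp2].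
    apply andb_prop in Hp2. destruct Hp2 as [Hp2 Hp3].
    unfold notin in Hp2, Hp3. apply Bool.negb_true_iff in Hp2, Hp3.
    apply inb_false in Hp2, Hp3.
    apply in_flat_map in Hp1. destruct Hp1 as [x [Hx Hp1]]. apply in_map_iff in Hp1.
    destruct Hp1 as [t [<- Ht]]. simpl in *. repeat split; eauto. }
  set (Ms := greedy G [] Cands).
  destruct (greedy_nodup G [] Cands ltac:(constructor) ltac:(constructor)) as [Hnd1 Hnd2].
  fold Ms in Hnd1, Hnd2.
  assert (HMs : forall p, In p Ms -> In p Cands).
  { intros p Hp. destruct (greedy_sub G [] Cands p Hp) as [[]|H]; auto. }
  destruct (le_lt_dec ((m + 1) * beta) (length Ms)) as [Hbig|Hsmall].
  - exists (map fst Ms), (nodup dec (bd A)), (map snd Ms).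
    assert (HU : forall u, In u (map fst Ms) -> In u A).
    { intros u Hu. apply in_map_iff in Hu. destruct Hu as [p [<- Hp]]. apply (HCands p (HMs p Hp)). }
    assert (HO : forall o, In o (map snd Ms) -> ~ In o A /\ ~ In o (bd A)).
    { intros o Ho. apply in_map_iff in Ho. destruct Ho as [p [<- Hp]]. apply HMs, HCands in Hp. tauto. }
    assert (HF : forall f, In f (nodup dec (bd A)) -> ~ In f A).
    { intros f Hf. apply nodup_In in Hf. unfold bd in Hf. apply in_notin in Hf. tauto. }
    unfold UFO. split; [auto|]. split; [apply NoDup_nodup|]. split; [auto|].
    split. { intros x Hx Hf. apply (HF x Hf). auto. }
    split. { intros x Hx Ho. apply (proj1 (HO x Ho)). auto. }
    split. { intros x Hf Ho. apply (proj2 (HO x Ho)). apply nodup_In in Hf. auto. }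
    split. { intros H. assert (length (map fst Ms) = 0) by (rewrite H; auto).
             rewrite length_map in H0. nia. }
    split. { rewrite length_map. change (length (nodup dec (bd A))) with beta. nia. }
    split.
    + exists (lookup G Ms). split; [|split; [|split]].
      * intros u Hu. apply in_map_iff in Hu. destruct Hu as [p [<- Hp]].
        rewrite lookup_spec; auto. apply in_map; auto.
      * intros u1 u2 Hu1 Hu2 Heq. apply in_map_iff in Hu1. destruct Hu1 as [p1 [<- Hp1]].
        apply in_map_iff in Hu2. destruct Hu2 as [p2 [<- Hp2]].
        rewrite !lookup_spec in Heq by auto.
        f_equal. apply (nodup_map_inj snd Ms); auto.
      * intros o Ho. apply in_map_iff in Ho. destruct Ho as [p [<- Hp]].
        exists (fst p). split. apply in_map; auto. apply lookup_spec; auto.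
      * intros u Hu. apply in_map_iff in Hu. destruct Hu as [p [<- Hp]].
        rewrite lookup_spec by auto. apply HMs, HCands in Hp.
        destruct Hp as [_ [_ [_ [t [Ht ->]]]]]. apply (dist_ball G mul inv e HG); auto.
    + intros u l Hu [_ Hc] Hl. left.
      destruct (cross A l u Hc (HU u Hu) (fun H => proj1 (HO _ Hl) H)) as [x [Hx1 Hx2]].
      exists x. split; auto. apply nodup_In. auto.
  - exfalso.
    set (Us := map fst Ms). set (Os := map snd Ms).
    set (A2 := filter (notin Us) A).
    assert (HA2c : card A <= card A2 + length Ms).
    { rewrite (card_split A Us). fold A2.
      assert (card (filter (isin Us) A) <= length Ms).
      { etransitivity. apply (card_incl _ Us). intros x Hx. apply in_isin in Hx. tauto.
        etransitivity. apply card_le_length. unfold Us. rewrite length_map. auto. }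
      lia. }
    pose proof (layers beta (n0 - q * beta) HA3 k A2 ltac:(lia)) as HL.
    assert (Hincl : incl (Cp k A2) (A ++ bd A ++ Os)).
    { intros y Hy. apply (Cp_sub G mul inv e HG) in Hy. destruct Hy as [x [t [Hx [Ht ->]]]].
      apply in_notin in Hx. destruct Hx as [Hx HxU].
      rewrite !in_app_iff.
      destruct (in_dec dec (mul x t) A) as [H1|H1]; auto.
      destruct (in_dec dec (mul x t) (bd A)) as [H2|H2]; auto.
      assert (HC : In (x, mul x t) Cands).
      { unfold Cands. apply filter_In. split.
        - apply in_flat_map. exists x. split; auto. apply in_map_iff. exists t. split; auto.
        - simpl. unfold notin. apply andb_true_intro. split; apply Bool.negb_true_iff; apply inb_false; auto. }
      destruct (greedy_max G [] Cands _ HC) as [H3|H3]; simpl in H3; fold Ms in H3.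
      + contradiction.
      + auto. }
    apply card_incl in Hincl.
    pose proof (card_app_le A (bd A ++ Os)). pose proof (card_app_le (bd A) Os).
    assert (card Os <= length Ms) by (etransitivity; [apply card_le_length|]; unfold Os; rewrite length_map; auto).
    assert (Hk : k * beta = 4 * ((m + 1) * beta) + 2 * beta) by (unfold k; ring). lia.
Qed.

End Main.

Theorem mainTheorem5 (G : Type) (mul : G -> G -> G) (inv : G -> G) (e : G)
  (HG : IsGroup mul inv e)
  (Hfg : FinitelyGenerated mul inv e)
  (Hinf : InfiniteType G)
  (Ham : Amenable mul inv) :
  ExtraterrestrialGroup mul inv e.
Proof.
  intros Sg HS Hgen m. exists (4 * (m + 1) + 2). intros r.
  apply (ufo_exists G mul inv e HG Sg HS Hgen Hinf Ham).
Qed.
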